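(* Let $W\in[0,1]^{k\times k}$ be a symmetric positive semidefinite matrix with unit diagonal, $\mu>0$, and consider linear utilities $u_i({\boldsymbol\theta})=W_i^\top{\boldsymbol\theta}$ with thresholds $\mu_i=\mu$ and strategy space $\mathbb{R}_+^k$. Let ${\boldsymbol\theta}^{\mathrm{eq}}$ be an optimal stable equilibrium, $I=\{i:\theta^{\mathrm{eq}}_i=0\}$, $\bar W$ and $\bar{\boldsymbol\theta}^{\mathrm{eq}}$ the restrictions of $W$ (rows and columns) and ${\boldsymbol\theta}^{\mathrm{eq}}$ to $[k]\setminus I$, and $B$ the submatrix of $W$ with rows indexed by $[k]\setminus I$ and columns indexed by $I$. If $\bar{\boldsymbol\theta}$ is an optimal solution of $\min_{\bf x}\{\mathbf{1}^\top{\bf x}:\bar W{\bf x}\ge\mu\mathbf{1},\ {\bf x}\ge\mathbf{0}\}$, then $B^\top(\bar{\boldsymbol\theta}^{\mathrm{eq}}-\bar{\boldsymbol\theta})=\mathbf{0}$.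
   Context: $W_i$ is the $i$-th column of $W$. ${\boldsymbol\theta}$ is feasible if $u_i({\boldsymbol\theta})\ge\mu$ for all $i$. A feasible ${\boldsymbol\theta}\in\mathbb{R}_+^k$ is a stable equilibrium if for no $i$ is there $0\le\theta_i'<\theta_i$ with $u_i(\theta_i',{\boldsymbol\theta}_{-i})\ge\mu$ (${\boldsymbol\theta}$ with $i$-th entry replaced). An optimal stable equilibrium minimizes $\mathbf{1}^\top{\boldsymbol\theta}$ among stable equilibria. *)

(* Defs.v *)
From mathcomp Require Import all_boot all_order all_algebra.
From mathcomp Require Import reals.
Set Implicit Arguments. Unset Strict Implicit. Unset Printing Implicit Defensive.
Import Order.TTheory GRing.Theory Num.Theory.
Local Open Scope ring_scope.

Section Defs.
Variables (R : realType) (k : nat).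

Definition admissible_W (W : 'M[R]_k) : Prop :=
  [/\ forall i j, 0 <= W i j <= 1,
      W^T = W,
      forall x : 'cV[R]_k, 0 <= (x^T *m W *m x) 0 0
    & forall i, W i i = 1].

Definition util (W : 'M[R]_k) (theta : 'cV[R]_k) (i : 'I_k) : R :=
  ((col i W)^T *m theta) 0 0.

Definition nonneg (theta : 'cV[R]_k) : Prop := forall j, 0 <= theta j 0.

Definition feasible (W : 'M[R]_k) (mu : R) (theta : 'cV[R]_k) : Prop :=
  forall i, mu <= util W theta i.

Definition replace (theta : 'cV[R]_k) (i : 'I_k) (t : R) : 'cV[R]_k :=
  \col_j (if j == i then t else theta j 0).

Definition stable_eq (W : 'M[R]_k) (mu : R) (theta : 'cV[R]_k) : Prop :=
  [/\ nonneg theta, feasible W mu theta &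
      forall i, ~ (exists t, 0 <= t /\ t < theta i 0 /\
                   mu <= util W (replace theta i t) i)].

Definition optimal_stable_eq (W : 'M[R]_k) (mu : R) (theta : 'cV[R]_k) : Prop :=
  stable_eq W mu theta /\
  forall theta', stable_eq W mu theta' ->
    \sum_j theta j 0 <= \sum_j theta' j 0.

(* Reduced LP on the index set J (= [k] \ I): vectors are represented by
   their entries on J (entries outside J are ignored). *)
Definition reduced_feasible (W : 'M[R]_k) (mu : R) (J : pred 'I_k)
    (x : 'cV[R]_k) : Prop :=
  (forall j, J j -> 0 <= x j 0) /\
  (forall i, J i -> mu <= \sum_(j | J j) W i j * x j 0).

Definition reduced_optimal (W : 'M[R]_k) (mu : R) (J : pred 'I_k)
    (x : 'cV[R]_k) : Prop :=
  reduced_feasible W mu J x /\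
  forall y, reduced_feasible W mu J y ->
    \sum_(j | J j) x j 0 <= \sum_(j | J j) y j 0.

End Defs.

(* Main.v *)
Require Import Defs.
From mathcomp Require Import all_boot all_order all_algebra.
From mathcomp Require Import reals.
From mathcomp Require Import ring lra.
Import Order.TTheory GRing.Theory Num.Theory.
Local Open Scope ring_scope.

Lemma utilE (R : realType) (k : nat) (W : 'M[R]_k) th j :
  util W th j = \sum_l W l j * th l 0.
Proof. by rewrite /util mxE; apply: eq_bigr => l _; rewrite !mxE. Qed.

Lemma sum_delta (R : realType) (k : nat) (i : 'I_k) (f : 'I_k -> R) :
  \sum_a (a == i)%:R * f a = f i.
Proof.
rewrite (bigD1 i) //= eqxx mul1r big1 ?addr0 // => a /negbTE ->; by rewrite mul0r.
Qed.

Lemma util_replace (R : realType) (k : nat) (W : 'M[R]_k) th j t :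
  W j j = 1 -> util W (replace th j t) j = util W th j - th j 0 + t.
Proof.
move=> Wjj; rewrite !utilE (bigD1 j) //= [in RHS](bigD1 j) //= !mxE eqxx Wjj.
have -> : \sum_(i < k | i != j) W i j * (replace th j t) i 0 =
          \sum_(i < k | i != j) W i j * th i 0.
  by apply: eq_bigr => i /negbTE H; rewrite !mxE H.
lra.
Qed.

Theorem lemma4 (R : realType) (k : nat) (W : 'M[R]_k) (mu : R)
    (theta_eq theta_bar : 'cV[R]_k) :
  admissible_W W -> 0 < mu ->
  optimal_stable_eq W mu theta_eq ->
  reduced_optimal W mu (fun j => theta_eq j 0 != 0) theta_bar ->
  forall i : 'I_k, theta_eq i 0 = 0 ->
    \sum_(j | theta_eq j 0 != 0) W j i * (theta_eq j 0 - theta_bar j 0) = 0.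
Proof.
move=> [W01 WT Wpsd Wdiag] mu0 [[nn feas stab] _] [[bnn bfeas] bopt] i thi.
have Ws a b : W a b = W b a by have := congr1 (fun M : 'M[R]_k => M b a) WT; rewrite mxE.
set J := fun j => theta_eq j 0 != 0.
have uA j : J j -> util W theta_eq j = mu.
  move=> Jj; have u1 := feas j.
  have pos : 0 < theta_eq j 0 by rewrite lt_def; apply/andP; split; [exact: Jj | exact: nn].
  apply/eqP; rewrite eq_le u1 andbT; rewrite leNgt; apply/negP => lt.
  apply: (stab j); exists (Num.max 0 (theta_eq j 0 - (util W theta_eq j - mu))).
  split; first by rewrite le_max lexx.
  split; first by rewrite gt_max pos /=; lra.
  rewrite util_replace //.
  have : theta_eq j 0 - (util W theta_eq j - mu) <= Num.max 0 (theta_eq j 0 - (util W theta_eq j - mu)).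
    by rewrite le_max lexx orbT.
  lra.
have A j : J j -> \sum_(l | J l) W j l * theta_eq l 0 = mu.
  move=> Jj; rewrite -(uA j Jj) utilE big_mkcond /=; apply: eq_bigr => l _.
  rewrite Ws; case: ifP => // /negbFE/eqP ->; by rewrite mulr0.
have eqfeas : reduced_feasible W mu J theta_eq.
  by split=> [j _|j Jj]; [exact: nn | rewrite A].
have sumle := bopt _ eqfeas.
have key : \sum_(j | J j) theta_eq j 0 * (\sum_(l | J l) W j l * theta_bar l 0 - mu)
     = mu * (\sum_(l | J l) theta_bar l 0 - \sum_(j | J j) theta_eq j 0).
  have -> : \sum_(j | J j) theta_eq j 0 * (\sum_(l | J l) W j l * theta_bar l 0 - mu)
     = \sum_(j | J j) \sum_(l | J l) theta_eq j 0 * W j l * theta_bar l 0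
       - mu * \sum_(j | J j) theta_eq j 0.
    rewrite mulr_sumr -sumrB; apply: eq_bigr => j _.
    rewrite mulrBr mulr_sumr mulrC; congr (_ - _); apply: eq_bigr => l _; ring.
  rewrite exchange_big /=.
  have -> : \sum_(l | J l) \sum_(j | J j) theta_eq j 0 * W j l * theta_bar l 0
      = \sum_(l | J l) mu * theta_bar l 0.
    apply: eq_bigr => l Jl; rewrite -(A l Jl) mulr_suml; apply: eq_bigr => j _.
    by rewrite (Ws j l); ring.
  by rewrite -mulr_sumr mulrBr.
have B j : J j -> \sum_(l | J l) W j l * theta_bar l 0 = mu.
  move=> Jj.
  have h0 : \sum_(j | J j) theta_eq j 0 * (\sum_(l | J l) W j l * theta_bar l 0 - mu) = 0.
    apply/eqP; rewrite eq_le; apply/andP; split.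
      rewrite key; apply: mulr_ge0_le0; [exact: ltW | lra].
    apply: sumr_ge0 => l Jl; apply: mulr_ge0; first exact: nn.
    by rewrite subr_ge0; apply: bfeas.
  have H : forall l, J l -> 0 <= theta_eq l 0 * (\sum_(l0 | J l0) W l l0 * theta_bar l0 0 - mu).
    move=> l Jl; apply: mulr_ge0; first exact: nn.
    by rewrite subr_ge0; apply: bfeas.
  have /eqP := psumr_eq0P H h0 Jj.
  by rewrite mulf_eq0 (negbTE Jj) /= subr_eq0 => /eqP.
set dd := fun j => if J j then theta_eq j 0 - theta_bar j 0 else 0.
have C j : J j -> \sum_l W j l * dd l = 0.
  move=> Jj.
  have -> : \sum_l W j l * dd l = \sum_(l | J l) (W j l * theta_eq l 0 - W j l * theta_bar l 0).
    rewrite [RHS]big_mkcond /=; apply: eq_bigr => l _; rewrite /dd; case: ifP => _; [ring | by rewrite mulr0].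
  by rewrite sumrB A // B // subrr.
have D : \sum_a dd a * (\sum_b W a b * dd b) = 0.
  apply: big1 => a _; rewrite /dd; case: ifP => Ja; last by rewrite mul0r.
  by rewrite C // mulr0.
set c := \sum_(j | J j) W j i * (theta_eq j 0 - theta_bar j 0).
have cE : c = \sum_a W a i * dd a.
  rewrite /c big_mkcond /=; apply: eq_bigr => a _; rewrite /dd; case: ifP => //.
  by rewrite mulr0.
have cE2 : \sum_b W i b * dd b = c.
  by rewrite cE; apply: eq_bigr => b _; rewrite Ws.
clearbody c.
pose x : 'cV[R]_k := \col_a (dd a - c * (a == i)%:R).
have Q : (x^T *m W *m x) 0 0 = \sum_a x a 0 * (\sum_b W a b * x b 0).
  rewrite mxE; under eq_bigr => b _ do rewrite mxE mulr_suml.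
  rewrite exchange_big /=; apply: eq_bigr => a _; rewrite mulr_sumr.
  by apply: eq_bigr => b _; rewrite !mxE; ring.
have inner a : \sum_b W a b * x b 0 = \sum_b W a b * dd b - c * W a i.
  under eq_bigr => b _ do rewrite mxE mulrBr.
  rewrite sumrB; congr (_ - _).
  rewrite mulrC -(@sum_delta R k i (fun b => W a b)) mulr_suml; apply: eq_bigr => b _; ring.
have := Wpsd x; rewrite Q.
under eq_bigr => a _ do rewrite inner mxE.
have -> : \sum_a (dd a - c * (a == i)%:R) * (\sum_b W a b * dd b - c * W a i)
   = \sum_a dd a * (\sum_b W a b * dd b) - c * \sum_a W a i * dd a
     - c * \sum_a (a == i)%:R * (\sum_b W a b * dd b)
     + c * c * \sum_a (a == i)%:R * W a i.
  rewrite !mulr_sumr -!sumrB -big_split /=; apply: eq_bigr => a _; ring.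
rewrite D !sum_delta -cE Wdiag cE2 => h.
have : c * c <= 0 by lra.
move=> h2; apply/eqP; rewrite -sqrf_eq0 eq_le sqr_ge0 andbT expr2 //.
Qed.
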